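(* Consider the discrete setting (finite state, TRV and input spaces) with horizon $T$, parameter $\beta>0$, and Problem OPT as defined in the context. Fix $t\in\{0,\dots,T-1\}$. A necessary condition for $q_t(\tilde{x}\mid x)$ to be optimal for OPT is that $$q_t(\tilde{x}_t\mid x_t)=\frac{q_t(\tilde{x}_t)\exp\big(-\beta\,\mathbb{E}(\nu_{t+1}+c_t\mid x_t,\tilde{x}_t)\big)}{Z_t(x_t)},$$ where $\nu_T(x_T)=c_T(x_T)$, $$\nu_t(x_t)=\mathbb{E}(c_t+\nu_{t+1}\mid x_t)+\frac{1}{\beta}\mathrm{KL}\big(q_t(\tilde{x}_t\mid x_t)\,\|\,q_t(\tilde{x}_t)\big),$$ $$Z_t(x_t)=\sum_{\tilde{x}}q_t(\tilde{x})\exp\big(-\beta\,\mathbb{E}(c_t+\nu_{t+1}\mid x_t,\tilde{x})\big).$$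
   Context: The system has finite state space $\mathcal{X}$, TRV space $\tilde{\mathcal{X}}$, input space $\mathcal{U}$, known transition probabilities $p_t(x_{t+1}\mid x_t,u_t)$, costs $c_t(x,u)$ for $t<T$ and terminal cost $c_T(x)$. Decision variables are stochastic maps $q_t(\tilde{x}\mid x)$ and policies $\pi_t(u\mid\tilde{x})$; the state distributions $p_t(x)$ satisfy the forward equations $p_t(x_{t+1}\mid x_t)=\sum_{u,\tilde{x}}p_t(x_{t+1}\mid x_t,u)\pi_t(u\mid\tilde{x})q_t(\tilde{x}\mid x_t)$ and $p_{t+1}(x_{t+1})=\sum_x p_t(x_{t+1}\mid x)p_t(x)$, and $q_t(\tilde{x})=\sum_x q_t(\tilde{x}\mid x)p_t(x)$. Problem OPT: minimize $\sum_{t=0}^{T}\big[\mathbb{E}_{p_t}c_t(x_t,u_t)+\frac{1}{\beta}\mathbb{I}(x_t;\tilde{x}_t)\big]$ with $\mathbb{I}(x_t;\tilde{x}_t)=\sum_{x,\tilde{x}}q_t(\tilde{x}\mid x)p_t(x)\log\frac{q_t(\tilde{x}\mid x)}{q_t(\tilde{x})}$. Conditional expectations are: $\mathbb{E}(c_t+\nu_{t+1}\mid x,\tilde{x})=\sum_u\pi_t(u\mid\tilde{x})\big[c_t(x,u)+\sum_{x'}p_t(x'\mid x,u)\nu_{t+1}(x')\big]$ and $\mathbb{E}(c_t+\nu_{t+1}\mid x)=\sum_{\tilde{x}}q_t(\tilde{x}\mid x)\,\mathbb{E}(c_t+\nu_{t+1}\mid x,\tilde{x})$. ''Necessary condition''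 refers to the first-order necessary conditions for optimality of the Lagrangian of OPT. *)

(* Defs.v *)
From HB Require Import structures.
From mathcomp Require Import all_boot all_order all_algebra.
From mathcomp Require Import reals.
From mathcomp.analysis Require Import sequences exp.
Set Implicit Arguments. Unset Strict Implicit. Unset Printing Implicit Defensive.
Import Order.TTheory GRing.Theory Num.Theory.
Local Open Scope ring_scope.

Section OPT.
Variables (R : realType) (X Xt U : finType).
(* P t x u y = p_t(y | x, u) ; c t x u = c_t(x,u) ; cT = c_T ; p0 = p_0 *)
Variables (T : nat) (beta : R) (P : nat -> X -> U -> X -> R)
  (c : nat -> X -> U -> R) (cT : X -> R) (p0 : X -> R).

(* stochastic map / kernel K(b | a) = K a b *)
Definition is_kernel (A B : finType) (K : A -> B -> R) : Prop :=
  (forall a b, 0 <= K a b) /\ (forall a, \sum_(b : B) K a b = 1).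

Definition is_dist (A : finType) (p : A -> R) : Prop :=
  (forall a, 0 <= p a) /\ \sum_(a : A) p a = 1.

(* decision variables: q t x xt = q_t(xt | x), pi t xt u = pi_t(u | xt) *)
Variables (q : nat -> X -> Xt -> R) (pi : nat -> Xt -> U -> R).

Fixpoint dist (t : nat) : X -> R :=
  match t with
  | 0 => p0
  | t'.+1 => fun y => \sum_(x : X) (\sum_(u : U) \sum_(xt : Xt)
               P t' x u y * pi t' xt u * q t' x xt) * dist t' x
  end.

Definition marg (t : nat) (xt : Xt) : R := \sum_(x : X) q t x xt * dist t x.

Definition MI (t : nat) : R :=
  \sum_(x : X) \sum_(xt : Xt) q t x xt * dist t x * ln (q t x xt / marg t xt).

Definition Ecost (t : nat) : R :=
  \sum_(x : X) dist t x *
    \sum_(xt : Xt) q t x xt * \sum_(u : U) pi t xt u * c t x u.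
Definition EcostT : R := \sum_(x : X) dist T x * cT x.

Definition Jcost : R :=
  \sum_(t < T) (Ecost t + beta^-1 * MI t) + (EcostT + beta^-1 * MI T).

(* E(c_t + V | x, xt) and E(c_t + V | x) *)
Definition condE2 (t : nat) (V : X -> R) (x : X) (xt : Xt) : R :=
  \sum_(u : U) pi t xt u * (c t x u + \sum_(y : X) P t x u y * V y).
Definition condE1 (t : nat) (V : X -> R) (x : X) : R :=
  \sum_(xt : Xt) q t x xt * condE2 t V x xt.

Definition KL (t : nat) (x : X) : R :=
  \sum_(xt : Xt) q t x xt * ln (q t x xt / marg t xt).

(* nu_rec k t = nu_t when k = T - t *)
Fixpoint nu_rec (k t : nat) : X -> R :=
  match k with
  | 0 => cT
  | k'.+1 => fun x => condE1 t (nu_rec k' t.+1) x + beta^-1 * KL t x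
  end.
Definition nu (t : nat) : X -> R := nu_rec (T - t) t.

Definition Zpart (t : nat) (x : X) : R :=
  \sum_(xt : Xt) marg t xt * expR (- beta * condE2 t (nu t.+1) x xt).

End OPT.

Definition feasible (R : realType) (X Xt U : finType) (T : nat)
  (q : nat -> X -> Xt -> R) (pi : nat -> Xt -> U -> R) : Prop :=
  (forall t, (t <= T)%N -> is_kernel (q t)) /\
  (forall t, (t < T)%N -> is_kernel (pi t)).

(* Main.v *)
Require Import Defs.
From HB Require Import structures.
From mathcomp Require Import all_boot all_order all_algebra.
From mathcomp Require Import reals boolp.
From mathcomp.analysis Require Import sequences exp.
From mathcomp Require Import lra ring.
Import Order.TTheory GRing.Theory Num.Theory.
Local Open Scope ring_scope.

Section Gibbs.
Variable R : realType.

Lemma ln_le_sub1 (y : R) : 0 < y -> ln y <= y - 1.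
Proof.
move=> y0; have := @le_ln1Dx R (y - 1); rewrite [1 + _]addrC subrK; apply.
lra.
Qed.

Lemma xln_ge (a b : R) : 0 <= a -> 0 <= b -> (b = 0 -> a = 0) ->
  a - b <= a * (ln a - ln b).
Proof.
move=> a0 b0 ba; have [->|ap] := eqVneq a 0; first by rewrite mul0r; lra.
have apos : 0 < a by rewrite lt0r ap.
have bpos : 0 < b by rewrite lt0r b0 andbT; apply/eqP => /ba /eqP; rewrite (negPf ap).
have := @ln_le_sub1 (b / a) (divr_gt0 bpos apos).
rewrite ln_div ?posrE // => H.
have : a * (ln b - ln a) <= a * (b / a - 1) by rewrite ler_pM2l.
have E : a * (b / a) = b by rewrite mulrC divfK ?lt0r_neq0.
rewrite mulrBr [in X in _ -> X]mulrBr [a * (_ - 1)]mulrBr E mulr1; lra.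
Qed.

Lemma xln_eq (a b : R) : 0 < a -> 0 < b -> a * (ln a - ln b) = a - b -> a = b.
Proof.
move=> ap bp E.
have y0 : 0 < b / a by rewrite divr_gt0.
have E2 : ln (b / a) = b / a - 1.
  rewrite ln_div ?posrE //.
  apply: (mulfI (lt0r_neq0 ap)).
  have E' : a * (b / a) = b by rewrite mulrC divfK ?lt0r_neq0.
  rewrite [a * (_ - 1)]mulrBr E' mulr1 mulrBr; rewrite mulrBr in E; lra.
have [h|h] := eqVneq (b / a) 1.
  by rewrite -(divfK (lt0r_neq0 ap) b) h mul1r.
have := @expR_gt1Dx R (b / a - 1); rewrite subr_eq0 h => /(_ isT).
rewrite -E2 lnK ?posrE // => H; lra.
Qed.
End Gibbs.


Section Gibbs2.
Variable R : realType.

Lemma pos_of (a : R) : 0 <= a -> a != 0 -> 0 < a.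
Proof. by move=> a0 an; rewrite lt0r an. Qed.

Lemma xlndiv (a b : R) : 0 <= a -> 0 <= b -> (b = 0 -> a = 0) ->
  a * ln (a / b) = a * (ln a - ln b).
Proof.
move=> a0 b0 ba; have [->|ap] := eqVneq a 0; first by rewrite !mul0r.
have bn : b != 0 by apply/eqP => /ba /eqP; rewrite (negPf ap).
by rewrite ln_div // posrE pos_of.
Qed.

Lemma gibbs_sum (I : finType) (a b : I -> R) :
  (forall i, 0 <= a i) -> (forall i, 0 <= b i) -> (forall i, b i = 0 -> a i = 0) ->
  \sum_i b i <= \sum_i a i -> 0 <= \sum_i a i * (ln (a i) - ln (b i)).
Proof.
move=> a0 b0 ba hs; apply: (le_trans (y := \sum_i (a i - b i))).
  by rewrite sumrB subr_ge0.
by apply: ler_sum => i _; exact: (@xln_ge _ _ _ (a0 i) (b0 i) (ba i)).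
Qed.

Lemma gibbs_eq (I : finType) (a b : I -> R) :
  (forall i, 0 <= a i) -> (forall i, 0 <= b i) -> (forall i, b i = 0 -> a i = 0) ->
  \sum_i b i <= \sum_i a i -> \sum_i a i * (ln (a i) - ln (b i)) <= 0 ->
  forall i, a i = b i.
Proof.
move=> a0 b0 ba hs hle.
pose f i := a i * (ln (a i) - ln (b i)) - (a i - b i).
have f0 i : 0 <= f i by rewrite /f subr_ge0; exact: (@xln_ge _ _ _ (a0 i) (b0 i) (ba i)).
have sf : \sum_i f i = 0.
  apply/eqP; rewrite eq_le sumr_ge0 // andbT /f sumrB sumrB.
  lra.
move=> i; have /eqP := (@psumr_eq0P _ _ _ _ (fun j _ => f0 j) sf i isT).
rewrite /f subr_eq0 => /eqP E.
have [a00|ap] := eqVneq (a i) 0.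
  by move: E; rewrite a00 mul0r => E; lra.
have bn : b i != 0 by apply/eqP => /ba /eqP; rewrite (negPf ap).
by apply: (@xln_eq R) => //; apply: pos_of.
Qed.
End Gibbs2.


Section MIlem.
Variables (R : realType) (X Xt : finType).

Lemma sum_ge_term (d : X -> R) (K : X -> Xt -> R) x xt :
  (forall x, 0 <= d x) -> (forall x xt, 0 <= K x xt) ->
  K x xt * d x <= \sum_x' K x' xt * d x'.
Proof.
move=> d0 K0; rewrite (bigD1 x) //= lerDl sumr_ge0 // => x' _.
by rewrite mulr_ge0.
Qed.

Lemma marg_sum (d : X -> R) (K : X -> Xt -> R) :
  (forall x, \sum_xt K x xt = 1) ->
  \sum_xt (\sum_x K x xt * d x) = \sum_x d x.
Proof.
move=> K1; rewrite exchange_big /=; apply: eq_bigr => x _.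
by rewrite -big_distrl /= K1 mul1r.
Qed.

Lemma MI_le_ref (d : X -> R) (K : X -> Xt -> R) (r : Xt -> R) :
  (forall x, 0 <= d x) -> (forall x xt, 0 <= K x xt) -> (forall xt, 0 <= r xt) ->
  (forall x xt, r xt = 0 -> K x xt * d x = 0) ->
  \sum_xt r xt <= \sum_xt (\sum_x K x xt * d x) ->
  \sum_x \sum_xt K x xt * d x * ln (K x xt / (\sum_x' K x' xt * d x'))
  <= \sum_x \sum_xt K x xt * d x * ln (K x xt / r xt).
Proof.
move=> d0 K0 r0 rK hs.
set m := fun xt => \sum_x' K x' xt * d x'.
have m0 xt : 0 <= m xt by rewrite sumr_ge0 // => x' _; rewrite mulr_ge0.
have key x xt : K x xt * d x * ln (K x xt / r xt) - K x xt * d x * ln (K x xt / m xt)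
   = K x xt * d x * (ln (m xt) - ln (r xt)).
  have [E|E] := eqVneq (K x xt * d x) 0; first by rewrite E !mul0r subrr.
  have Kn : K x xt != 0 by apply: contraNneq E => ->; rewrite mul0r.
  have dn : d x != 0 by apply: contraNneq E => ->; rewrite mulr0.
  have rn : r xt != 0 by apply: contraNneq E => /rK ->.
  have mp : 0 < m xt.
    apply: (lt_le_trans _ (@sum_ge_term d K x xt d0 K0)).
    by rewrite mulr_gt0 // pos_of.
  rewrite !ln_div ?posrE ?pos_of //; last by rewrite lt0r_neq0.
  ring.
rewrite -subr_ge0 -sumrB.
under eq_bigr => x _ do rewrite -sumrB.
under eq_bigr => x _ do under eq_bigr => xt _ do rewrite key.
rewrite exchange_big /=.
under eq_bigr => xt _ do rewrite -big_distrl /=.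
apply: gibbs_sum => // xt /rK H; apply: big1 => x _; exact: H.
Qed.


Lemma MI_ge0 (d : X -> R) (K : X -> Xt -> R) :
  (forall x, 0 <= d x) -> (forall x xt, 0 <= K x xt) ->
  \sum_x d x = 1 -> (forall x, \sum_xt K x xt = 1) ->
  0 <= \sum_x \sum_xt K x xt * d x * ln (K x xt / (\sum_x' K x' xt * d x')).
Proof.
move=> d0 K0 d1 K1.
set m := fun xt => \sum_x' K x' xt * d x'.
have m0 xt : 0 <= m xt by rewrite sumr_ge0 // => x' _; rewrite mulr_ge0.
have ms : \sum_xt m xt = 1 by rewrite /m marg_sum.
apply: sumr_ge0 => x _.
have [E|dn] := eqVneq (d x) 0.
  by apply: sumr_ge0 => xt _; rewrite E mulr0 mul0r.
have -> : \sum_xt K x xt * d x * ln (K x xt / m xt)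
   = d x * \sum_xt K x xt * (ln (K x xt) - ln (m xt)).
  rewrite big_distrr; apply: eq_bigr => xt _ /=.
  rewrite mulrAC (@xlndiv R _ _ (K0 x xt) (m0 xt)); first by ring.
  move=> mE; have := @sum_ge_term d K x xt d0 K0.
  rewrite -/(m xt) mE => H; apply/eqP; rewrite eq_le K0 andbT.
  by rewrite -(ler_pM2r (@pos_of R _ (d0 x) dn)) mul0r.
apply: mulr_ge0 => //; apply: gibbs_sum => //; last by rewrite ms K1.
move=> xt mE; have := @sum_ge_term d K x xt d0 K0.
rewrite -/(m xt) mE => H; apply/eqP; rewrite eq_le K0 andbT.
by rewrite -(ler_pM2r (@pos_of R _ (d0 x) dn)) mul0r.
Qed.
End MIlem.


Section Main.
Variables (R : realType) (X Xt U : finType) (T : nat) (beta : R)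
  (P : nat -> X -> U -> X -> R) (c : nat -> X -> U -> R) (cT : X -> R)
  (p0 : X -> R) (pi : nat -> Xt -> U -> R).

Lemma step_id (q : nat -> X -> Xt -> R) s (V : X -> R) :
  \sum_x dist P p0 q pi s x * condE1 P c q pi s V x =
  Ecost P c p0 q pi s + \sum_y dist P p0 q pi s.+1 y * V y.
Proof.
rewrite /condE1 /condE2 /Ecost /=.
have E1 x : \sum_xt q s x xt * \sum_u pi s xt u * (c s x u + \sum_y P s x u y * V y)
  = \sum_xt q s x xt * \sum_u pi s xt u * c s x u
    + \sum_xt q s x xt * \sum_u pi s xt u * \sum_y P s x u y * V y.
  rewrite -big_split; apply: eq_bigr => xt _ /=; rewrite -mulrDr -big_split /=.
  by congr (_ * _); apply: eq_bigr => u _; rewrite mulrDr.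
under eq_bigr => x _ do rewrite E1 mulrDr.
rewrite big_split /=; congr (_ + _).
transitivity (\sum_x \sum_xt \sum_u \sum_y
   dist P p0 q pi s x * q s x xt * pi s xt u * P s x u y * V y).
  apply: eq_bigr => x _; rewrite big_distrr; apply: eq_bigr => xt _ /=.
  rewrite mulrA big_distrr; apply: eq_bigr => u _ /=.
  rewrite mulrA big_distrr; apply: eq_bigr => y _ /=; ring.
symmetry.
transitivity (\sum_y \sum_x \sum_u \sum_xt
   dist P p0 q pi s x * q s x xt * pi s xt u * P s x u y * V y).
  apply: eq_bigr => y _; rewrite big_distrl; apply: eq_bigr => x _ /=.
  rewrite !big_distrl; apply: eq_bigr => u _ /=.
  rewrite !big_distrl; apply: eq_bigr => xt _ /=; ring.
rewrite exchange_big; apply: eq_bigr => x _ /=.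
rewrite exchange_big /=.
under eq_bigr => u _ do rewrite exchange_big /=.
by rewrite exchange_big.
Qed.
End Main.


Section Main2.
Variables (R : realType) (X Xt U : finType) (T : nat) (beta : R)
  (P : nat -> X -> U -> X -> R) (c : nat -> X -> U -> R) (cT : X -> R)
  (p0 : X -> R) (pi : nat -> Xt -> U -> R).

Lemma dist_congr n (q q' : nat -> X -> Xt -> R) :
  (forall s, (s < n)%N -> q' s = q s) -> dist P p0 q' pi n = dist P p0 q pi n.
Proof.
elim: n => [//|n IH] H /=.
rewrite IH => [|s sn]; last by apply: H; rewrite ltnS ltnW.
by rewrite H.
Qed.

Lemma dist_prop (q : nat -> X -> Xt -> R) :
  is_dist p0 -> (forall s, (s < T)%N -> forall x, is_kernel (P s x)) ->
  feasible T q pi ->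
  forall n, (n <= T)%N -> (forall x, 0 <= dist P p0 q pi n x) /\ \sum_x dist P p0 q pi n x = 1.
Proof.
move=> [p00 p01] HP [Hq Hpi]; elim=> [//|n IH] nT /=.
have nT' : (n < T)%N by [].
have [d0 d1] := IH (ltnW nT').
have [q0 q1] := Hq n (ltnW nT'); have [pi0 pi1] := Hpi n nT'.
split.
  move=> y; apply: sumr_ge0 => x _; apply: mulr_ge0 => //.
  apply: sumr_ge0 => u _; apply: sumr_ge0 => xt _.
  have [P0 _] := HP n nT' x.
  by rewrite !mulr_ge0.
rewrite exchange_big /= -d1; apply: eq_bigr => x _.
rewrite -big_distrl /= -[RHS]mul1r; congr (_ * _).
rewrite exchange_big /=.
transitivity (\sum_u \sum_xt pi n xt u * q n x xt).
  apply: eq_bigr => u _; rewrite exchange_big /=; apply: eq_bigr => xt _.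
  rewrite -big_distrl -big_distrl /=.
  by have [_ ->] := HP n nT' x; rewrite mul1r.
rewrite exchange_big /= -(q1 x); apply: eq_bigr => xt _.
by rewrite -big_distrl /= pi1 mul1r.
Qed.

Lemma nu_S (q : nat -> X -> Xt -> R) s : (s < T)%N ->
  nu T beta P c cT p0 q pi s = fun x => condE1 P c q pi s (nu T beta P c cT p0 q pi s.+1) x
     + beta^-1 * KL P p0 q pi s x.
Proof. by move=> sT; rewrite /nu -subnSK. Qed.

Definition Fut (q : nat -> X -> Xt -> R) s :=
  \sum_(s <= i < T) (Ecost P c p0 q pi i + beta^-1 * MI P p0 q pi i) + EcostT T P cT p0 q pi.

Lemma MI_KL (q : nat -> X -> Xt -> R) s :
  MI P p0 q pi s = \sum_x dist P p0 q pi s x * KL P p0 q pi s x.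
Proof.
rewrite /MI /KL; apply: eq_bigr => x _; rewrite big_distrr; apply: eq_bigr => xt _ /=.
by rewrite mulrAC mulrC mulrA.
Qed.

Lemma Fut_gen (q q'' : nat -> X -> Xt -> R) (rel : R -> R -> bool) :
  (forall a, rel a a) -> (forall a b a' b', rel a b -> rel a' b' -> rel (a + a') (b + b')) ->
  (forall a b, rel a b -> rel (beta^-1 * a) (beta^-1 * b)) ->
  forall k s, (s + k)%N = T ->
  (forall i, (s <= i < T)%N -> q'' i = q i) ->
  (forall i, (s <= i < T)%N -> rel (MI P p0 q'' pi i) (\sum_x dist P p0 q'' pi i x * KL P p0 q pi i x)) ->
  rel (Fut q'' s) (\sum_x dist P p0 q'' pi s x * nu T beta P c cT p0 q pi s x).
Proof.
move=> hrefl hadd hmul; elim=> [|k IH] s sk Hq HM.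
  rewrite addn0 in sk; subst s.
  rewrite /Fut big_geq // add0r /EcostT /nu subnn /=; exact: (hrefl).
have sT : (s < T)%N by rewrite -sk -addSnnS leq_addr.
rewrite /Fut big_ltn //.
rewrite nu_S //.
have -> : \sum_x dist P p0 q'' pi s x * (condE1 P c q pi s (nu T beta P c cT p0 q pi s.+1) x
     + beta^-1 * KL P p0 q pi s x)
  = Ecost P c p0 q'' pi s + beta^-1 * (\sum_x dist P p0 q'' pi s x * KL P p0 q pi s x)
    + \sum_y dist P p0 q'' pi s.+1 y * nu T beta P c cT p0 q pi s.+1 y.
  have -> : condE1 P c q pi s = condE1 P c q'' pi s by rewrite /condE1 Hq // sT leqnn.
  rewrite (big_morph _ (fun a b => erefl (a + b)) (erefl 0)) /=.
  under eq_bigr => x _ do rewrite mulrDr.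
  rewrite big_split /= step_id big_distrr /=.
  have -> : \sum_i dist P p0 q'' pi s i * (beta^-1 * KL P p0 q pi s i)
    = \sum_i beta^-1 * (dist P p0 q'' pi s i * KL P p0 q pi s i).
    by apply: eq_bigr => i _; ring.
  ring.
rewrite -addrA; apply: (hadd).
  apply: (hadd); first exact: (hrefl).
  by apply: (hmul); apply: (HM); rewrite leqnn sT.
apply: IH; first by rewrite addSnnS.
  by move=> i /andP [si iT]; apply: (Hq); rewrite iT ltnW.
by move=> i /andP [si iT]; apply: (HM); rewrite iT ltnW.
Qed.

Lemma Jsplit (q'' : nat -> X -> Xt -> R) t : (t < T)%N ->
  Jcost T beta P c cT p0 q'' pi =
  \sum_(0 <= i < t) (Ecost P c p0 q'' pi i + beta^-1 * MI P p0 q'' pi i)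
   + (Ecost P c p0 q'' pi t + beta^-1 * MI P p0 q'' pi t) + Fut q'' t.+1
   + beta^-1 * MI P p0 q'' pi T.
Proof.
move=> tT; rewrite /Jcost /Fut -(big_mkord xpredT (fun i => Ecost P c p0 q'' pi i + beta^-1 * MI P p0 q'' pi i)) (@big_cat_nat _ _ _ t) //=; last exact: ltnW.
rewrite (big_ltn tT); ring.
Qed.
End Main2.


Theorem theorem2 (R : realType) (X Xt U : finType) (T : nat) (beta : R)
  (P : nat -> X -> U -> X -> R) (c : nat -> X -> U -> R) (cT : X -> R)
  (p0 : X -> R) (q : nat -> X -> Xt -> R) (pi : nat -> Xt -> U -> R) (t : nat) :
  0 < beta ->
  is_dist p0 ->
  (forall s, (s < T)%N -> forall x, is_kernel (P s x)) ->
  feasible T q pi ->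
  (forall (q' : nat -> X -> Xt -> R) (pi' : nat -> Xt -> U -> R), feasible T q' pi' ->
     Jcost T beta P c cT p0 q pi <= Jcost T beta P c cT p0 q' pi') ->
  (* finiteness of the KL terms entering nu_{t+1}, ..., nu_T *)
  (forall s, (t < s)%N -> (s <= T)%N -> forall x xt,
     marg P p0 q pi s xt = 0 -> q s x xt = 0) ->
  (t < T)%N ->
  forall x, 0 < dist P p0 q pi t x ->
  forall xt,
    q t x xt =
      marg P p0 q pi t xt
      * expR (- beta * condE2 P c pi t (nu T beta P c cT p0 q pi t.+1) x xt)
      / Zpart T beta P c cT p0 q pi t x.
Proof.
move=> bpos Hp0 HP Hfeas Hopt Hfin tT x dpos xt.
have Hfeas' := Hfeas; case: Hfeas' => [Hq Hpi].
have [q0 q1] := Hq t (ltnW tT).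
have [d0 d1] := @dist_prop R X Xt U T P p0 pi q Hp0 HP Hfeas t (ltnW tT).
set d := dist P p0 q pi t in dpos d0 d1 *.
set m := marg P p0 q pi t.
set E2 := fun xt => condE2 P c pi t (nu T beta P c cT p0 q pi t.+1) x xt.
have mE xt' : m xt' = \sum_x' q t x' xt' * d x' by [].
have m0 xt' : 0 <= m xt' by rewrite mE sumr_ge0 // => x' _; rewrite mulr_ge0.
have mq xt' : m xt' = 0 -> q t x xt' = 0.
  move=> h; have := @sum_ge_term R X Xt d (q t) x xt' d0 q0.
  rewrite -mE h => H; apply/eqP; rewrite eq_le q0 andbT.
  by rewrite -(ler_pM2r dpos) mul0r.
have [xt0 hx0] : exists xt0, q t x xt0 != 0.
  case: (pickP (fun xt0 => q t x xt0 != 0)) => [xt0 h|h]; first by exists xt0.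
  have := q1 x; rewrite big1 => [/eqP|i _]; first by rewrite eq_sym oner_eq0.
  by have := h i => /= /negbFE /eqP.
set Z := Zpart T beta P c cT p0 q pi t x.
have ZE : Z = \sum_xt' m xt' * expR (- beta * E2 xt') by [].
have mpos0 : 0 < m xt0.
  apply: (lt_le_trans _ (@sum_ge_term R X Xt d (q t) x xt0 d0 q0)).
  by rewrite mulr_gt0 // pos_of.
have Zpos : 0 < Z.
  rewrite ZE (bigD1 xt0) //=; apply: (lt_le_trans (y := m xt0 * expR (- beta * E2 xt0))).
    by rewrite mulr_gt0 // expR_gt0.
  by rewrite lerDl sumr_ge0 // => i _; rewrite mulr_ge0 // expR_ge0.
pose g xt' := m xt' * expR (- beta * E2 xt') / Z.
have g0 xt' : 0 <= g xt' by rewrite /g divr_ge0 ?mulr_ge0 ?expR_ge0 // ltW.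
have g1 : \sum_xt' g xt' = 1 by rewrite /g -big_distrl /= -ZE divff // lt0r_neq0.
have gm xt' : g xt' = 0 -> m xt' = 0.
  rewrite /g => /eqP; rewrite !mulf_eq0 invr_eq0 (negPf (lt0r_neq0 Zpos)) orbF.
  by rewrite (gt_eqF (expR_gt0 _)) orbF => /eqP.
have mg xt' : m xt' = 0 -> g xt' = 0 by rewrite /g => ->; rewrite !mul0r.
pose q' : nat -> X -> Xt -> R := fun s x' xt' =>
  if s == t then (if x' == x then g xt' else q s x' xt')
  else if s == T then (if xt' == xt then 1 else 0) else q s x' xt'.
have q'lt s : s != t -> s != T -> q' s = q s.
  by move=> h1 h2; apply/funext => x'; apply/funext => xt'; rewrite /q' (negPf h1) (negPf h2).
have q't x' : x' != x -> q' t x' = q t x'.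
  by move=> h; apply/funext => xt'; rewrite /q' eqxx (negPf h).
have q'tx : q' t x = g by apply/funext => xt'; rewrite /q' !eqxx.
have q'T : q' T = fun _ xt' => if xt' == xt then 1 else 0.
  by apply/funext => x'; apply/funext => xt'; rewrite /q' (gtn_eqF tT) eqxx.
have feas' : feasible T q' pi.
  split => // s sT; case: (eqVneq s t) => [->|st].
    split.
      by move=> x' xt'; rewrite /q' eqxx; case: (x' == x); [exact: g0 | exact: q0].
    by move=> x'; rewrite /q' eqxx; case: (x' == x); [exact: g1 | exact: q1].
  case: (eqVneq s T) => [->|sT'].
    rewrite q'T; split; first by move=> _ xt'; case: (xt' == xt).
    move=> a /=; rewrite (bigD1 xt) //= eqxx big1 ?addr0 // => i hi.
    by rewrite (negPf hi).
  by rewrite q'lt //; apply: Hq.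
have HJ := Hopt q' pi feas'.
rewrite (@Jsplit R X Xt U T beta P c cT p0 pi q t tT)
        (@Jsplit R X Xt U T beta P c cT p0 pi q' t tT) in HJ.
have q'ltt i : (i < t)%N -> q' i = q i.
  by move=> it; rewrite q'lt // ?ltn_eqF // (ltn_trans it tT).
have dlt i : (i <= t)%N -> dist P p0 q' pi i = dist P p0 q pi i.
  move=> it; apply: dist_congr => s si; apply: q'ltt.
  exact: (leq_trans si it).
have A : \sum_(0 <= i < t) (Ecost P c p0 q' pi i + beta^-1 * MI P p0 q' pi i)
       = \sum_(0 <= i < t) (Ecost P c p0 q pi i + beta^-1 * MI P p0 q pi i).
  apply: eq_big_nat => i /andP [_ it].
  by rewrite /Ecost /MI /marg (q'ltt i it) (dlt i (ltnW it)).
rewrite A in HJ.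
have [d'0 d'1] := @dist_prop R X Xt U T P p0 pi q' Hp0 HP feas' T (leqnn T).
have MI'T : MI P p0 q' pi T = 0.
  rewrite /MI /marg q'T /=; apply: big1 => x' _; apply: big1 => xt' _.
  case: (xt' == xt); last by rewrite !mul0r.
  under eq_bigr do rewrite mul1r.
  rewrite d'1.
  by rewrite divr1 ln1 mulr0.
have [dT0 dT1] := @dist_prop R X Xt U T P p0 pi q Hp0 HP Hfeas T (leqnn T).
have MIT0 : 0 <= MI P p0 q pi T.
  have [qT0 qT1] := Hq T (leqnn T).
  exact: (@MI_ge0 R X Xt (dist P p0 q pi T) (q T) dT0 qT0 dT1 qT1).
have kT : (t.+1 + (T - t.+1))%N = T by rewrite subnKC.
have FutE : Fut R X Xt U T beta P c cT p0 pi q t.+1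
    = \sum_y dist P p0 q pi t.+1 y * nu T beta P c cT p0 q pi t.+1 y.
  apply/eqP; apply: (@Fut_gen R X Xt U T beta P c cT p0 pi q q (fun a b => a == b) _ _ _ (T - t.+1) t.+1 kT).
  - by move=> a.
  - by move=> a b a' b' /eqP -> /eqP ->.
  - by move=> a b /eqP ->.
  - by [].
  - by move=> i _; rewrite MI_KL.
have binv0 : 0 <= beta^-1 by rewrite invr_ge0 ltW.
have FutL : Fut R X Xt U T beta P c cT p0 pi q' t.+1
    <= \sum_y dist P p0 q' pi t.+1 y * nu T beta P c cT p0 q pi t.+1 y.
  apply: (@Fut_gen R X Xt U T beta P c cT p0 pi q q' (fun a b => a <= b) _ _ _ (T - t.+1) t.+1 kT).
  - by move=> a.
  - by move=> a b a' b' h1 h2; apply: lerD.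
  - by move=> a b h; apply: ler_wpM2l.
  - by move=> i /andP [ti iT]; apply: q'lt; [rewrite gtn_eqF | rewrite ltn_eqF].
  move=> i /andP [ti iT].
  have hi : q' i = q i by apply: q'lt; [rewrite gtn_eqF | rewrite ltn_eqF].
  have [di0 di1] := @dist_prop R X Xt U T P p0 pi q' Hp0 HP feas' i (ltnW iT).
  have [ei0 ei1] := @dist_prop R X Xt U T P p0 pi q Hp0 HP Hfeas i (ltnW iT).
  have [qi0 qi1] := Hq i (ltnW iT).
  rewrite /MI /marg hi.
  apply: (le_trans (@MI_le_ref R X Xt (dist P p0 q' pi i) (q i) (marg P p0 q pi i) di0 qi0 _ _ _)).
  - by move=> xt'; apply: sumr_ge0 => x' _; apply: mulr_ge0.
  - by move=> x' xt' /(Hfin i ti (ltnW iT)) ->; rewrite mul0r.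
  - by rewrite /marg !marg_sum // ei1 di1.
  rewrite le_eqVlt; apply/orP; left; apply/eqP; apply: eq_bigr => x' _; rewrite /KL big_distrr.
  by apply: eq_bigr => xt' _ /=; ring.
have dt : dist P p0 q' pi t = d by apply: dlt.
have [q't0 q't1] : is_kernel (q' t) by case: feas' => H _; apply: H; apply: ltnW.
have MI't : MI P p0 q' pi t <=
   \sum_x' \sum_xt' q' t x' xt' * d x' * ln (q' t x' xt' / m xt').
  rewrite /MI /marg dt.
  apply: (@MI_le_ref R X Xt d (q' t) m d0 q't0 m0).
  - move=> x' xt' hm; case: (eqVneq x' x) => [->|ne].
      by rewrite q'tx mg // mul0r.
    rewrite q't //; have := @sum_ge_term R X Xt d (q t) x' xt' d0 q0.
    rewrite -mE hm => H; apply/eqP; rewrite eq_le H mulr_ge0 //.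
  - by rewrite !marg_sum.
set V := nu T beta P c cT p0 q pi t.+1.
have key : Ecost P c p0 q pi t + beta^-1 * MI P p0 q pi t
   + \sum_y dist P p0 q pi t.+1 y * V y
  <= Ecost P c p0 q' pi t + beta^-1 * (\sum_x' \sum_xt' q' t x' xt' * d x' * ln (q' t x' xt' / m xt'))
   + \sum_y dist P p0 q' pi t.+1 y * V y.
  rewrite FutE MI'T mulr0 addr0 in HJ.
  have h1 : 0 <= beta^-1 * MI P p0 q pi T by rewrite mulr_ge0.
  have h2 := ler_wpM2l binv0 MI't.
  lra.
have key2 : \sum_x' (d x' * condE1 P c q pi t V x'
      + beta^-1 * \sum_xt' q t x' xt' * d x' * ln (q t x' xt' / m xt'))
  <= \sum_x' (d x' * condE1 P c q' pi t V x'
      + beta^-1 * \sum_xt' q' t x' xt' * d x' * ln (q' t x' xt' / m xt')).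
  rewrite !big_split /= -!big_distrr /=.
  have e1 := @step_id R X Xt U P c p0 pi q t V.
  have e2 := @step_id R X Xt U P c p0 pi q' t V.
  rewrite dt in e2; rewrite -/d in e1.
  rewrite e1 e2; move: key; rewrite /MI /marg -/d; lra.
rewrite (bigD1 x) //= [X in _ <= X](bigD1 x) //= in key2.
have rest : \sum_(x' | x' != x) (d x' * condE1 P c q' pi t V x'
      + beta^-1 * \sum_xt' q' t x' xt' * d x' * ln (q' t x' xt' / m xt'))
  = \sum_(x' | x' != x) (d x' * condE1 P c q pi t V x'
      + beta^-1 * \sum_xt' q t x' xt' * d x' * ln (q t x' xt' / m xt')).
  by apply: eq_bigr => x' ne; rewrite /condE1 q't.
rewrite rest lerD2r /condE1 q'tx in key2.
have Hx : \sum_xt' (q t x xt' * E2 xt' + beta^-1 * (q t x xt' * ln (q t x xt' / m xt')))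
   <= \sum_xt' (g xt' * E2 xt' + beta^-1 * (g xt' * ln (g xt' / m xt'))).
  rewrite -(ler_pM2l dpos) !big_distrr /=.
  move: key2; rewrite !big_distrr /= -!big_split /=.
  have ee (K : Xt -> R) : \sum_i (d x * (K i * condE2 P c pi t V x i) + beta^-1 * (K i * d x * ln (K i / m i)))
     = \sum_i d x * (K i * E2 i + beta^-1 * (K i * ln (K i / m i))).
    by apply: eq_bigr => i _; rewrite /E2 /V; ring.
  by rewrite (ee (q t x)) (ee g).
have bn : beta != 0 by rewrite lt0r_neq0.
have Zn : Z != 0 by rewrite lt0r_neq0.
have Lg xt' : g xt' * E2 xt' + beta^-1 * (g xt' * ln (g xt' / m xt'))
    = - beta^-1 * ln Z * g xt'.
  case: (eqVneq (m xt') 0) => [h|h].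
    by rewrite (mg _ h) !mul0r mulr0 addr0 mulr0.
  have -> : g xt' / m xt' = expR (- beta * E2 xt') / Z by rewrite /g; field; rewrite h Zn.
  rewrite ln_div ?posrE ?expR_gt0 // expRK; field; exact: bn.
have Lq xt' : q t x xt' * E2 xt' + beta^-1 * (q t x xt' * ln (q t x xt' / m xt'))
    = - beta^-1 * ln Z * q t x xt' + beta^-1 * (q t x xt' * (ln (q t x xt') - ln (g xt'))).
  case: (eqVneq (q t x xt') 0) => [h|h].
    by rewrite h !mul0r !mulr0 addr0.
  have qp : 0 < q t x xt' by apply: pos_of.
  have mn : m xt' != 0 by apply/eqP => /mq /eqP; rewrite (negPf h).
  have mp : 0 < m xt' by apply: pos_of.
  have gn : g xt' != 0 by apply/eqP => /gm /eqP; rewrite (negPf mn).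
  have lg : ln (g xt') = ln (m xt') + (- beta * E2 xt') - ln Z.
    by rewrite /g ln_div ?posrE ?mulr_gt0 ?expR_gt0 // lnM ?posrE ?expR_gt0 // expRK.
  rewrite ln_div ?posrE // lg; field; exact: bn.
move: Hx; rewrite (eq_bigr _ (fun i _ => Lq i)) (eq_bigr _ (fun i _ => Lg i)).
rewrite big_split /= -!big_distrr /= q1 g1 mulr1 gerDl pmulr_rle0 ?invr_gt0 // => Hs.
have sle : \sum_i g i <= \sum_i q t x i by rewrite q1 g1.
exact: (@gibbs_eq R Xt (q t x) g (q0 x) g0 (fun i h => mq i (gm i h)) sle Hs xt).
Qed.
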